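(* Let $R$ be a finite rack with two decompositions $R=S_1\cup T_1$ and $R=S_2\cup T_2$. If $T_1\cong T_2$ and the subracks $S_1$ and $S_2$ are connected, then $S_1\cong S_2$.
   Context: A rack is a set $R$ with a binary operation $\rhd$ such that every left multiplication $\ell_a\colon b\mapsto a\rhd b$ is a bijection and $a\rhd(b\rhd c)=(a\rhd b)\rhd(a\rhd c)$ for all $a,b,c$. A subrack of $R$ is a subset $S$ with $\ell_s(S)=S$ for all $s\in S$, regarded as a rack with the restricted operation. A decomposition $R=S\cup T$ means that $S$ and $T$ are disjoint non-empty subracks whose union is $R$. The inner automorphism group $\mathrm{Inn}(R)$ is the subgroup of the symmetric group on $R$ generated by all $\ell_a$; a rack is connected if it is non-empty and $\mathrm{Inn}(R)$ acts transitively on it. *)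

(* Defs.v *)
From mathcomp Require Import all_boot all_fingroup.
Set Implicit Arguments. Unset Strict Implicit. Unset Printing Implicit Defensive.

Definition is_rack (T : finType) (op : T -> T -> T) : Prop :=
  (forall a, bijective (op a)) /\
  (forall a b c, op a (op b c) = op (op a b) (op a c)).

Definition subrack (T : finType) (op : T -> T -> T) (S : {set T}) : Prop :=
  forall s, s \in S -> op s @: S = S.

Definition decomposition (T : finType) (op : T -> T -> T) (S U : {set T}) : Prop :=
  [/\ subrack op S /\ subrack op U, S != set0, U != set0,
      S :&: U = set0 & S :|: U = [set: T]].

Definition subrack_iso (T : finType) (op : T -> T -> T) (S U : {set T}) : Prop :=
  exists f : T -> T,
    [/\ {in S &, injective f}, f @: S = U &
        {in S &, forall a b, f (op a b) = op (f a) (f b)}].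

(* The left multiplication l_s of the subrack S, extended by the identity
   outside S (so that it is a permutation of T when S is a subrack, s \in S). *)
Definition lmul_on (T : finType) (op : T -> T -> T) (S : {set T}) (s : T) : T -> T :=
  fun x => if x \in S then op s x else x.

(* Inn(S): the group generated by the left multiplications l_s, s \in S,
   as permutations (of T, acting trivially outside S). *)
Definition Inn (T : finType) (op : T -> T -> T) (S : {set T}) : {set {perm T}} :=
  (<<[set p : {perm T} | [exists s in S, [forall x, p x == lmul_on op S s x]]]>>)%g.

Definition connected (T : finType) (op : T -> T -> T) (S : {set T}) : Prop :=
  S != set0 /\ [transitive Inn op S, on S | 'P].

(* Main.v *)
Require Import Defs.
From mathcomp Require Import all_boot all_fingroup.
From Stdlib Require Import Classical.
Set Implicit Arguments. Unset Strict Implicit.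

Definition cn (T : finType) (op : T -> T -> T) (X : {set T}) : Prop :=
  forall Y : {set T}, Y \subset X -> Y != set0 ->
    (forall x y, x \in X -> y \in Y -> op x y \in Y) -> Y = X.

Lemma conn_cn (T : finType) (op : T -> T -> T) (X : {set T}) :
  connected op X -> cn op X.
Proof.
move=> [_ tr] Y sYX nY clY.
have sub: Inn op X \subset ('N(Y | 'P))%g.
  rewrite /Inn gen_subG; apply/subsetP => p; rewrite inE.
  move=> /existsP [s /andP [sX' /forallP Hp]].
  have pY: p @: Y \subset Y.
    apply/subsetP => _ /imsetP [y yY ->]; move/eqP: (Hp y) => ->.
    rewrite /lmul_on (subsetP sYX _ yY); exact: clY.
  have eY: p @: Y = Y.
    by apply/eqP; rewrite eqEcard pY (card_imset _ (@perm_inj _ p)) /=.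
  apply/astabsP => x /=.
  by rewrite -{1}eY (mem_imset _ _ (@perm_inj _ p)).
apply/eqP; rewrite eqEsubset sYX /=; case/set0Pn: nY => y yY.
rewrite -(atransP tr y (subsetP sYX _ yY)); apply/subsetP => _ /orbitP [p pI <-].
by rewrite (astabs_act _ (subsetP sub _ pI)).
Qed.

Lemma split_lemma (T : finType) (op : T -> T -> T) (S U X : {set T}) :
  is_rack op -> decomposition op S U -> subrack op X -> cn op X ->
  X :&: S != set0 -> X \subset S.
Proof.
move=> [bij _] [[sS sU] _ _ dSU cSU] sX cX ne.
have: X :&: S = X.
  apply: cX => //; first exact: subsetIl.
  move=> x y xX; rewrite inE => /andP [yX yS]; rewrite inE.
  apply/andP; split; first by rewrite -(sX x xX); exact: imset_f.
  have: x \in S :|: U by rewrite cSU inE.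
  case/setUP => [xS|xU]; first by rewrite -(sS x xS); exact: imset_f.
  apply: contraT => nS.
  have: op x y \in U.
    have: op x y \in S :|: U by rewrite cSU inE.
    by case/setUP => // H; rewrite H in nS.
  rewrite -(sU x xU) => /imsetP [u uU e].
  have yu: y = u by case: (bij x) => g g1 _; rewrite -(g1 y) e g1.
  have: y \in S :&: U by rewrite inE yS yu uU.
  by rewrite dSU inE.
move=> <-; exact: subsetIr.
Qed.

Lemma transport (T : finType) (op : T -> T -> T) (A : {set T}) (g : T -> T) :
  subrack op A -> cn op A -> {in A &, injective g} ->
  {in A &, forall a b, g (op a b) = op (g a) (g b)} ->
  subrack op (g @: A) /\ cn op (g @: A).
Proof.
move=> sA cA ig hg; split.
- move=> _ /imsetP [a aA ->].
  rewrite -imset_comp.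
  transitivity ((g \o op a) @: A).
    by apply: eq_in_imset => b bA /=; rewrite hg.
  by rewrite imset_comp sA.
- move=> Y sY nY clY. set Z := [set a in A | g a \in Y].
  have eZ : Z = A.
    apply: cA.
    + by apply/subsetP => a; rewrite inE; case/andP.
    + case/set0Pn: nY => y yY; case/imsetP: (subsetP sY _ yY) => a aA e.
      by apply/set0Pn; exists a; rewrite inE aA -e yY.
    + move=> x y xA; rewrite !inE => /andP [yA gy].
      have xy: op x y \in A by rewrite -(sA x xA) imset_f.
      by rewrite xy hg // clY // imset_f.
  apply/eqP; rewrite eqEsubset sY /=; apply/subsetP => _ /imsetP [a aA ->].
  by move: aA; rewrite -eZ inE => /andP [].
Qed.

Lemma iso_sym (T : finType) (op : T -> T -> T) (A B : {set T}) :
  subrack op A -> subrack_iso op A B -> subrack_iso op B A.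
Proof.
move=> sA [g [ig eg hg]]; subst B.
pose h b := odflt b [pick a in A | g a == b].
have hK : {in A, forall a, h (g a) = a}.
  move=> a aA; rewrite /h; case: pickP => [a' /andP [a'A /eqP e]|/(_ a)] /=.
    exact: ig.
  by rewrite aA eqxx.
exists h; split.
- move=> _ _ /imsetP [a aA ->] /imsetP [b bA ->] e.
  by rewrite !hK // in e; rewrite e.
- apply/eqP; rewrite eqEsubset; apply/andP; split; apply/subsetP.
    by move=> _ /imsetP [_ /imsetP [a aA ->] ->]; rewrite hK.
  by move=> a aA; apply/imsetP; exists (g a); [exact: imset_f | rewrite hK].
- move=> _ _ /imsetP [a aA ->] /imsetP [b bA ->].
  have ab: op a b \in A by rewrite -(sA a aA) imset_f.
  by rewrite -hg // !hK.
Qed.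

Lemma imset_inj_sub (T : finType) (f : T -> T) (D A B : {set T}) :
  {in D &, injective f} -> A \subset D -> B \subset D -> f @: A = f @: B -> A = B.
Proof.
move=> inj sA sB e.
have H : forall A B : {set T}, A \subset D -> B \subset D -> f @: A = f @: B ->
  A \subset B.
  move=> A' B' sA' sB' e'; apply/subsetP => x xA.
  have: f x \in f @: B' by rewrite -e' imset_f.
  case/imsetP => y yB fxy.
  by rewrite (inj x y (subsetP sA' _ xA) (subsetP sB' _ yB) fxy).
by apply/eqP; rewrite eqEsubset (H A B) // (H B A).
Qed.

Unset Implicit Arguments. Set Strict Implicit.

Theorem corollary4p3 (T : finType) (op : T -> T -> T) (S1 T1 S2 T2 : {set T}) :
  is_rack op ->
  decomposition op S1 T1 -> decomposition op S2 T2 ->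
  subrack_iso op T1 T2 ->
  connected op S1 -> connected op S2 ->
  subrack_iso op S1 S2.
Proof.
move=> rk dec1 dec2 [f [iff ef hf]] c1 c2.
have dec1' := dec1; have dec2' := dec2.
case: dec1' => [[sS1 sT1] nS1 nT1 d1 u1].
case: dec2' => [[sS2 sT2] nS2 nT2 d2 u2].
apply: iso_sym => //.
pose G i := iter i f.
pose X i := G i @: S2.
have XS : forall i, X i.+1 = f @: X i.
  by move=> i; rewrite /X -imset_comp.
have cardS : #|S1| = #|S2|.
  have e1 : #|T| = #|S1| + #|T1| by rewrite -cardsT -u1 cardsU d1 cards0 subn0.
  have e2 : #|T| = #|S2| + #|T2| by rewrite -cardsT -u2 cardsU d2 cards0 subn0.
  have e3 : #|T2| = #|T1| by rewrite -ef card_in_imset.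
  by apply/eqP; rewrite -(eqn_add2r #|T1|) -e1 -e3 -e2.
have ex : exists k, ~~ (X k \subset T1).
  apply: NNPP => H.
  have all1 : forall i, X i \subset T1.
    by move=> i; apply/negPn/negP => nH; apply: H; exists i.
  pose N := #|{set T}|.
  pose g (i : 'I_N.+1) := X i.
  have ninj : ~ injective g.
    by move/leq_card; rewrite card_ord ltnn.
  have desc : forall i j, X i = X (i + j).+1 -> X 0 = X j.+1.
    elim=> [//|i IH] j e; apply: IH.
    rewrite addSn (XS i) (XS (i + j).+1) in e.
    exact: (imset_inj_sub iff (all1 _) (all1 _) e).
  have [i [j [eij nij]]] : exists i j : 'I_N.+1, g i = g j /\ i <> j.
    apply: NNPP => H2; apply: ninj => i j e.
    apply: NNPP => H3; apply: H2; by exists i, j.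
  have [m em] : exists m, X 0 = X m.+1.
    rewrite /g in eij.
    case: (ltngtP i j) => [lt|lt|e].
    - exists (j - i).-1; apply: (desc i).
      by rewrite eij; congr X; rewrite -addnS prednK ?subn_gt0 // subnKC // ltnW.
    - exists (i - j).-1; apply: (desc j).
      by rewrite -eij; congr X; rewrite -addnS prednK ?subn_gt0 // subnKC // ltnW.
    - by case: nij; apply: val_inj.
  have : S2 \subset T2.
    have -> : S2 = X 0 by rewrite /X /G imset_id.
    by rewrite em XS -ef; apply: imsetS.
  move=> sub; case/set0Pn: nS2 => x xS.
  have: x \in S2 :&: T2 by rewrite inE xS (subsetP sub).
  by rewrite d2 inE.
case: (ex_minnP ex) => k Pk mink.
have below : forall i, i < k -> X i \subset T1.
  move=> i lik; apply: contraT => nH.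
  by have := mink i nH; rewrite leqNgt lik.
have props : forall i, i <= k ->
   {in S2 &, injective (G i)} /\ {in S2 &, forall a b, G i (op a b) = op (G i a) (G i b)}.
  elim=> [|i IH] lik.
    by split; [move=> a b _ _ | move=> a b _ _].
  have [ii hi] := IH (ltnW lik).
  have sub := below i lik.
  have inT : forall a, a \in S2 -> G i a \in T1.
    by move=> a aS; apply: (subsetP sub); apply: imset_f.
  split.
    move=> a b aS bS /= e; apply: ii => //.
    exact: (iff _ _ (inT a aS) (inT b bS) e).
  move=> a b aS bS /=.
  by rewrite hi // hf // inT.
have [ik hk] := props k (leqnn k).
have [sX cX] := transport sS2 (conn_cn c2) ik hk.
have sub : X k \subset S1.
  apply: (split_lemma rk dec1 sX cX).
  case/subsetPn: Pk => x xX xT.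
  apply/set0Pn; exists x; rewrite inE xX /=.
  have: x \in S1 :|: T1 by rewrite u1 inE.
  by case/setUP => // H; rewrite H in xT.
exists (G k); split => //.
apply/eqP; rewrite eqEcard sub /= cardS card_in_imset //.
Qed.
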